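(* Let $k,a,b$ be integers with $k<a<b$. Let $G$ be a bipartite graph with classes $A=\{v_1,v_2,\dots,v_a\}$ and $B$, where $|B|=b$ and every vertex of $A$ has degree at least $b-k$ in $G$. Then for any non-negative integers $c_1,\dots,c_a$ with $\sum_{i=1}^a c_i \le b-k$, $G$ contains a star forest (a subgraph consisting of vertex-disjoint stars) in which, for every $i$, the vertex $v_i$ is the center of a star with exactly $c_i$ leaves (all leaves lying in $B$). *)

(* Defs.v *)
From mathcomp Require Import all_boot all_order all_algebra.
Set Implicit Arguments. Unset Strict Implicit. Unset Printing Implicit Defensive.

(* A bipartite graph with classes A = 'I_a (vertex v_i = i) and B = 'I_b is
   given by its edge relation E : 'I_a -> 'I_b -> bool. *)

Definition nbhd (a b : nat) (E : 'I_a -> 'I_b -> bool) (i : 'I_a) : {set 'I_b} :=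
  [set y | E i y].

Definition degA (a b : nat) (E : 'I_a -> 'I_b -> bool) (i : 'I_a) : nat :=
  #|nbhd E i|.

(* Leaves are neighbours of their center (edges of G); the stars
   are vertex-disjoint: distinct centers, leaf sets pairwise disjoint, and
   leaves (in B) are never centers (in A). *)
Definition has_star_forest (a b : nat) (E : 'I_a -> 'I_b -> bool) (c : 'I_a -> nat) : Prop :=
  exists S : 'I_a -> {set 'I_b},
    [/\ forall i, S i \subset nbhd E i,
        forall i, #|S i| = c i
      & forall i j, i != j -> [disjoint S i & S j]].

(* Main.v *)
Require Import Defs.
From mathcomp Require Import all_boot all_order all_algebra.
Set Implicit Arguments. Unset Strict Implicit. Unset Printing Implicit Defensive.

Lemma sub_card (T : finType) (D : {set T}) n : n <= #|D| ->
  exists X : {set T}, X \subset D /\ #|X| = n.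
Proof.
elim: n => [|n IH] h; first by exists set0; rewrite sub0set cards0.
have [X [sXD cX]] := IH (ltnW h).
have : X \proper D by rewrite properEcard sXD cX.
case/properP=> _ [y yD yX].
exists (y |: X); split; first by rewrite subUset sub1set yD.
by rewrite cardsU1 yX cX.
Qed.

Lemma greedy (I T : finType) (N : I -> {set T}) (c : I -> nat) (P : {set I}) :
  (forall i, i \in P -> \sum_(j in P) c j <= #|N i|) ->
  exists S : I -> {set T},
    [/\ forall i, i \in P -> S i \subset N i,
        forall i, i \in P -> #|S i| = c i
      & forall i j, i \in P -> j \in P -> i != j -> [disjoint S i & S j]].
Proof.
move: {2}#|P| (erefl #|P|) => n; elim: n P => [|n IH] P cP h.
  exists (fun _ => set0); split=> i; by rewrite (cards0_eq cP) inE.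
have [x xP] : exists x, x \in P by apply/card_gt0P; rewrite cP.
have cP' : #|P :\ x| = n by move: cP; rewrite (cardsD1 x) xP add1n => -[].
have hs : \sum_(j in P) c j = c x + \sum_(j in P :\ x) c j.
  by rewrite (bigD1 x) //=; congr (_ + _); apply: eq_bigl => j; rewrite !inE andbC.
have [S [S1 S2 S3]] : exists S : I -> {set T},
    [/\ forall i, i \in P :\ x -> S i \subset N i,
        forall i, i \in P :\ x -> #|S i| = c i
      & forall i j, i \in P :\ x -> j \in P :\ x -> i != j -> [disjoint S i & S j]].
  apply: IH cP' _ => i; rewrite inE => /andP[_ iP].
  by apply: leq_trans (h i iP); rewrite hs leq_addl.
pose U := \bigcup_(j in P :\ x) S j.
have cU : #|U| <= \sum_(j in P :\ x) c j.
  rewrite /U; elim/big_ind2: _ => //; first by rewrite cards0.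
    move=> A m B p hA hB; apply: leq_trans; first exact: leq_card_setU. exact: leq_add.
  by move=> j jP; rewrite S2.
have : c x <= #|N x :\: U|.
  rewrite cardsD leq_subRL; last by rewrite subset_leq_card // subsetIl.
  apply: leq_trans (h x xP); rewrite hs addnC; apply: leq_add => //.
  by apply: leq_trans cU; rewrite subset_leq_card // subsetIr.
case/sub_card=> X [sX cX].
exists (fun j => if j == x then X else S j); split.
- move=> i iP; case: eqP => [->|/eqP ne]; first by apply: subset_trans sX (subsetDl _ _).
  by apply: S1; rewrite !inE ne.
- move=> i iP; case: eqP => [->|/eqP ne] //; by apply: S2; rewrite !inE ne.
- have dXU : forall j, j \in P :\ x -> [disjoint X & S j].
    move=> j jP; rewrite disjoints_subset; apply: subset_trans sX _.
    apply/subsetP => y; rewrite !inE => /andP[yU _]; apply: contra yU => yS.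
    by apply/bigcupP; exists j.
  move=> i j iP jP ne.
  case: (eqVneq i x) => [ei|nei]; case: (eqVneq j x) => [ej|nej].
  + by rewrite ei ej eqxx in ne.
  + by apply: dXU; rewrite !inE nej.
  + by rewrite disjoint_sym; apply: dXU; rewrite !inE nei.
  + by apply: S3 => //; rewrite !inE ?nei ?nej.
Qed.

Import Order.TTheory GRing.Theory Num.Theory.

Theorem claim9 (k : int) (a b : nat) (hka : (k < a%:Z)%R) (hab : (a < b)%N)
  (E : 'I_a -> 'I_b -> bool)
  (hdeg : forall i : 'I_a, (b%:Z - k <= (degA E i)%:Z)%R)
  (c : 'I_a -> nat)
  (hc : ((\sum_(i < a) c i)%N%:Z <= b%:Z - k)%R) :
  has_star_forest E c.
Proof.
have hN : forall i, i \in [set: 'I_a] -> \sum_(j in [set: 'I_a]) c j <= #|nbhd E i|.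
  move=> i _; have := le_trans hc (hdeg i); rewrite lez_nat.
  by under eq_bigl do rewrite in_setT.
have [S [S1 S2 S3]] := greedy hN.
exists S; split => [i|i|i j]; [exact: S1|exact: S2|exact: S3].
Qed.
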